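(* For $0<\rho\le1$ and $\varphi\in[0,2\pi]$ let $A(\rho,\varphi)=D_\rho T_\varphi D_\rho^{-1}=\begin{pmatrix}\cos\varphi&-\rho^{-1}\sin\varphi\\ \rho\sin\varphi&\cos\varphi\end{pmatrix}$ and let $\theta_1(\varphi,\rho):=\theta_1^{\sup,\varlimsup}$ be the first outer angular value of the autonomous discrete system $u_{n+1}=A(\rho,\varphi)u_n$ in $\mathbb R^2$. Then $(\varphi,\rho)\mapsto\theta_1(\varphi,\rho)$ is upper semicontinuous on $[0,2\pi]\times(0,1]$.
   Context: $D_\rho=\mathrm{diag}(1,\rho)$, $T_\varphi=\begin{pmatrix}\cos\varphi&-\sin\varphi\\ \sin\varphi&\cos\varphi\end{pmatrix}$. For a sequence of invertible matrices $A_n$ (here $A_n\equiv A(\rho,\varphi)$), $\Phi(n,0)=A_{n-1}\cdots A_0$, $\Phi(0,0)=I$. For nonzero $x,y\in\mathbb R^2$ (identified with lines), $\angle(x,y)\in[0,\pi/2]$ is the angle between $\mathrm{span}(x)$ and $\mathrm{span}(y)$, i.e. $\cos\angle(x,y)=|x^\top y|/(\|x\|\|y\|)$. The first outer angular value is $\theta_1^{\sup,\varlimsup}=\sup_{v\ne0}\varlimsup_{n\to\infty}\frac1n\sum_{j=1}^n\angle(\Phi(j-1,0)v,\Phi(j,0)v)$. It is known that for this system this value coincides with the three other angular values ($\sup$ over $v$ outside or inside, $\varlimsup$ or $\varliminf$). *)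

(* Defs.v *)
From Stdlib Require Import Reals.
From Coquelicot Require Import Coquelicot.
Open Scope R_scope.

Definition vec := (R * R)%type.
Definition dot (x y : vec) : R := fst x * fst y + snd x * snd y.
Definition vnorm (x : vec) : R := sqrt (dot x x).

Definition Dmat (rho : R) (x : vec) : vec := (fst x, rho * snd x).
Definition Dinv (rho : R) (x : vec) : vec := (fst x, snd x / rho).
Definition Tmat (phi : R) (x : vec) : vec :=
  (cos phi * fst x - sin phi * snd x, sin phi * fst x + cos phi * snd x).

Definition Amat (rho phi : R) (x : vec) : vec := Dmat rho (Tmat phi (Dinv rho x)).

Fixpoint Phi (rho phi : R) (n : nat) (v : vec) : vec :=
  match n with
  | O => v
  | S k => Amat rho phi (Phi rho phi k v)
  end.

(* angle in [0, pi/2] between the lines spanned by nonzero x, y *)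
Definition angle (x y : vec) : R :=
  acos (Rabs (dot x y) / (vnorm x * vnorm y)).

(* (1/n) sum_{j=1}^n angle(Phi(j-1,0)v, Phi(j,0)v), at index n = m+1 *)
Definition avg_angle (rho phi : R) (v : vec) (m : nat) : R :=
  sum_f_R0 (fun k => angle (Phi rho phi k v) (Phi rho phi (S k) v)) m / INR (S m).

Definition theta1 (phi rho : R) : Rbar :=
  Rbar_lub (fun t => exists v : vec, v <> (0, 0) /\
                     t = LimSup_seq (avg_angle rho phi v)).

Definition dom (phi rho : R) : Prop := 0 <= phi <= 2 * PI /\ 0 < rho <= 1.

Definition usc_on (P : R -> R -> Prop) (f : R -> R -> Rbar) : Prop :=
  forall a0 b0, P a0 b0 ->
  forall r : R, Rbar_lt (f a0 b0) r ->
  exists delta : R, 0 < delta /\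
    forall a b, P a b -> Rabs (a - a0) < delta -> Rabs (b - b0) < delta ->
    Rbar_lt (f a b) r.

(* Main.v *)
Require Import Defs.
From Stdlib Require Import Reals Lra Lia Psatz Classical ZArith.
From Coquelicot Require Import Coquelicot.
Open Scope R_scope.

Definition dl1 (x y : vec) : R := Rabs (fst x - fst y) + Rabs (snd x - snd y).
Definition cfun (x y : vec) : R := Rabs (dot x y) / (vnorm x * vnorm y).

Lemma vnorm_ge0 x : 0 <= vnorm x.
Proof. apply sqrt_pos. Qed.

Lemma vnorm_sq x : vnorm x * vnorm x = fst x * fst x + snd x * snd x.
Proof. unfold vnorm, dot. apply sqrt_sqrt. nra. Qed.

Lemma comp1_le x : Rabs (fst x) <= vnorm x.
Proof.
  unfold vnorm, dot. rewrite <- sqrt_Rsqr_abs. apply sqrt_le_1_alt. unfold Rsqr. nra.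
Qed.

Lemma comp2_le x : Rabs (snd x) <= vnorm x.
Proof.
  unfold vnorm, dot. rewrite <- sqrt_Rsqr_abs. apply sqrt_le_1_alt. unfold Rsqr. nra.
Qed.

Lemma Rabs_sq a : Rabs a * Rabs a = a * a.
Proof. rewrite <- Rabs_mult. apply Rabs_pos_eq. nra. Qed.

Lemma vnorm_le_l1 x : vnorm x <= Rabs (fst x) + Rabs (snd x).
Proof.
  unfold vnorm, dot. rewrite <- (sqrt_square (Rabs (fst x) + Rabs (snd x))).
  - apply sqrt_le_1_alt. pose proof (Rabs_sq (fst x)). pose proof (Rabs_sq (snd x)).
    pose proof (Rabs_pos (fst x)). pose proof (Rabs_pos (snd x)). nra.
  - pose proof (Rabs_pos (fst x)). pose proof (Rabs_pos (snd x)). lra.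
Qed.

Lemma norm_diff x x' : 0 < vnorm x -> Rabs (vnorm x - vnorm x') <= dl1 x x'.
Proof.
  intros Hx. pose proof (vnorm_ge0 x').
  pose proof (vnorm_sq x). pose proof (vnorm_sq x').
  assert (E : vnorm x - vnorm x' =
     ((fst x - fst x') * (fst x + fst x') + (snd x - snd x') * (snd x + snd x'))
       / (vnorm x + vnorm x')).
  { field_simplify_eq; [nra | lra]. }
  rewrite E. rewrite Rabs_div by lra. rewrite (Rabs_pos_eq (vnorm x + vnorm x')) by lra.
  apply Rle_div_l; [lra|].
  unfold dl1.
  eapply Rle_trans; [apply Rabs_triang|]. rewrite !Rabs_mult.
  pose proof (comp1_le x). pose proof (comp2_le x). pose proof (comp1_le x'). pose proof (comp2_le x').
  pose proof (Rabs_triang (fst x) (fst x')). pose proof (Rabs_triang (snd x) (snd x')).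
  pose proof (Rabs_pos (fst x - fst x')). pose proof (Rabs_pos (snd x - snd x')).
  assert (Rabs (fst x + fst x') <= vnorm x + vnorm x') by lra.
  assert (Rabs (snd x + snd x') <= vnorm x + vnorm x') by lra.
  nra.
Qed.

Lemma div_diff a a' n n' m : 0 < m -> m <= n -> m <= n' -> Rabs a' <= n' ->
  Rabs (a / n - a' / n') <= (Rabs (a - a') + Rabs (n - n')) / m.
Proof.
  intros Hm Hn Hn' Ha.
  assert (E : a / n - a' / n' = ((a - a') * n' + a' * (n' - n)) / (n * n')).
  { field. lra. }
  rewrite E. rewrite Rabs_div by (apply Rmult_integral_contrapositive_currified; lra). rewrite (Rabs_pos_eq (n * n')) by nra.
  assert (B : Rabs ((a - a') * n' + a' * (n' - n)) <= n' * (Rabs (a - a') + Rabs (n - n'))).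
  { eapply Rle_trans; [apply Rabs_triang|]. rewrite !Rabs_mult.
    rewrite (Rabs_pos_eq n') by lra. rewrite (Rabs_minus_sym n' n).
    pose proof (Rabs_pos (n - n')). nra. }
  apply Rle_div_l; [nra|].
  pose proof (Rabs_pos (a - a')). pose proof (Rabs_pos (n - n')).
  apply (Rle_trans _ _ _ B).
  unfold Rdiv. 
  assert (0 <= (Rabs (a - a') + Rabs (n - n')) * n') by (apply Rmult_le_pos; lra).
  assert (n' * (Rabs (a - a') + Rabs (n - n')) * m <= (Rabs (a - a') + Rabs (n - n')) * (n * n')) by nra.
  apply (Rmult_le_reg_r m); [lra|].
  replace ((Rabs (a - a') + Rabs (n - n')) * / m * (n * n') * m) with ((Rabs (a - a') + Rabs (n - n')) * (n * n')) by (field; lra).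
  lra.
Qed.

Lemma cfun_lip m x y x' y' : 0 < m -> m <= vnorm x -> m <= vnorm y -> m <= vnorm x' -> m <= vnorm y' ->
  Rabs (cfun x y - cfun x' y') <= 3 * (dl1 x x' + dl1 y y') / m.
Proof.
  intros Hm H1 H2 H3 H4.
  set (nx := vnorm x) in *. set (ny := vnorm y) in *. set (nx' := vnorm x') in *. set (ny' := vnorm y') in *.
  assert (C : forall p q, 0 < vnorm p -> 0 < vnorm q ->
     cfun p q = Rabs ((fst p / vnorm p) * (fst q / vnorm q) + (snd p / vnorm p) * (snd q / vnorm q))).
  { intros p q Hp Hq. unfold cfun, dot.
    replace ((fst p / vnorm p) * (fst q / vnorm q) + (snd p / vnorm p) * (snd q / vnorm q))
      with ((fst p * fst q + snd p * snd q) / (vnorm p * vnorm q)) by (field; lra).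
    rewrite Rabs_div by (apply Rmult_integral_contrapositive_currified; lra). rewrite (Rabs_pos_eq (vnorm p * vnorm q)) by nra. reflexivity. }
  rewrite (C x y), (C x' y') by (fold nx ny nx' ny'; lra).
  fold nx ny nx' ny'.
  eapply Rle_trans; [apply Rabs_triang_inv2|].
  set (u1 := fst x / nx). set (u2 := snd x / nx). set (v1 := fst y / ny). set (v2 := snd y / ny).
  set (u1' := fst x' / nx'). set (u2' := snd x' / nx'). set (v1' := fst y' / ny'). set (v2' := snd y' / ny').
  assert (Bd : forall a n, 0 < n -> Rabs a <= n -> Rabs (a / n) <= 1).
  { intros a n Hn Ha. rewrite Rabs_div by lra. rewrite (Rabs_pos_eq n) by lra.
    apply Rle_div_l; lra. }
  assert (Hv1 : Rabs v1 <= 1) by (apply Bd; [lra| apply comp1_le]).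
  assert (Hv2 : Rabs v2 <= 1) by (apply Bd; [lra| apply comp2_le]).
  assert (Hu1 : Rabs u1' <= 1) by (apply Bd; [lra| apply comp1_le]).
  assert (Hu2 : Rabs u2' <= 1) by (apply Bd; [lra| apply comp2_le]).
  assert (Nx : Rabs (nx - nx') <= dl1 x x') by (apply norm_diff; fold nx; lra).
  assert (Ny : Rabs (ny - ny') <= dl1 y y') by (apply norm_diff; fold ny; lra).
  assert (E1 : Rabs (u1 - u1') <= (Rabs (fst x - fst x') + Rabs (nx - nx')) / m)
    by (apply div_diff; auto; apply comp1_le).
  assert (E2 : Rabs (u2 - u2') <= (Rabs (snd x - snd x') + Rabs (nx - nx')) / m)
    by (apply div_diff; auto; apply comp2_le).
  assert (E3 : Rabs (v1 - v1') <= (Rabs (fst y - fst y') + Rabs (ny - ny')) / m)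
    by (apply div_diff; auto; apply comp1_le).
  assert (E4 : Rabs (v2 - v2') <= (Rabs (snd y - snd y') + Rabs (ny - ny')) / m)
    by (apply div_diff; auto; apply comp2_le).
  replace (u1 * v1 + u2 * v2 - (u1' * v1' + u2' * v2'))
    with ((u1 - u1') * v1 + (u2 - u2') * v2 + (u1' * (v1 - v1') + u2' * (v2 - v2'))) by ring.
  assert (T : Rabs ((u1 - u1') * v1 + (u2 - u2') * v2 + (u1' * (v1 - v1') + u2' * (v2 - v2')))
     <= Rabs (u1 - u1') + Rabs (u2 - u2') + Rabs (v1 - v1') + Rabs (v2 - v2')).
  { eapply Rle_trans; [apply Rabs_triang|].
    eapply Rle_trans; [apply Rplus_le_compat; apply Rabs_triang|].
    rewrite !Rabs_mult.
    pose proof (Rabs_pos (u1 - u1')). pose proof (Rabs_pos (u2 - u2')).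
    pose proof (Rabs_pos (v1 - v1')). pose proof (Rabs_pos (v2 - v2')).
    pose proof (Rabs_pos v1). pose proof (Rabs_pos u1'). pose proof (Rabs_pos v2). pose proof (Rabs_pos u2').
    nra. }
  apply (Rle_trans _ _ _ T).
  unfold dl1 in *.
  assert (S : (Rabs (fst x - fst x') + Rabs (nx - nx')) / m + (Rabs (snd x - snd x') + Rabs (nx - nx')) / m
     + (Rabs (fst y - fst y') + Rabs (ny - ny')) / m + (Rabs (snd y - snd y') + Rabs (ny - ny')) / m
     <= 3 * (Rabs (fst x - fst x') + Rabs (snd x - snd x') + (Rabs (fst y - fst y') + Rabs (snd y - snd y'))) / m).
  { unfold Rdiv. rewrite <- !Rmult_plus_distr_r.
    apply Rmult_le_compat_r. { left. apply Rinv_0_lt_compat. lra. }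
    pose proof (Rabs_pos (fst x - fst x')). pose proof (Rabs_pos (snd x - snd x')).
    pose proof (Rabs_pos (fst y - fst y')). pose proof (Rabs_pos (snd y - snd y')). lra. }
  lra.
Qed.

Lemma sin_abs_le t : Rabs (sin t) <= Rabs t.
Proof.
  destruct (Rtotal_order t 0) as [Hn|[He|Hp]].
  - pose proof (sin_lt_x (- t) ltac:(lra)). rewrite sin_neg in H.
    rewrite (Rabs_left t) by lra.
    pose proof (SIN_bound t).
    destruct (Rle_lt_dec t (-1)).
    + unfold Rabs; destruct Rcase_abs; lra.
    + assert (0 <= sin (- t)) by (apply sin_ge_0; pose proof PI2_1; lra).
      rewrite sin_neg in H1. unfold Rabs; destruct Rcase_abs; lra.
  - subst. rewrite sin_0. rewrite Rabs_R0. lra.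
  - pose proof (sin_lt_x t Hp).
    rewrite (Rabs_right t) by lra.
    pose proof (SIN_bound t).
    destruct (Rle_lt_dec 1 t).
    + unfold Rabs; destruct Rcase_abs; lra.
    + assert (0 <= sin t) by (apply sin_ge_0; pose proof PI2_1; lra).
      unfold Rabs; destruct Rcase_abs; lra.
Qed.

Lemma cos_lip a b : Rabs (cos a - cos b) <= Rabs (a - b).
Proof.
  rewrite form2. rewrite !Rabs_mult.
  pose proof (sin_abs_le ((a - b) / 2)). pose proof (SIN_bound ((a + b) / 2)).
  assert (Rabs (sin ((a + b) / 2)) <= 1) by (unfold Rabs; destruct Rcase_abs; lra).
  replace (Rabs (-2)) with 2 by (rewrite Rabs_left; lra).
  replace (Rabs ((a - b) / 2)) with (Rabs (a - b) / 2) in H.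
  2:{ unfold Rdiv. rewrite Rabs_mult. rewrite (Rabs_pos_eq (/2)) by lra. reflexivity. }
  pose proof (Rabs_pos (sin ((a - b) / 2))). pose proof (Rabs_pos (sin ((a + b) / 2))).
  nra.
Qed.

Lemma sin_lip a b : Rabs (sin a - sin b) <= Rabs (a - b).
Proof.
  rewrite form4. rewrite !Rabs_mult.
  pose proof (sin_abs_le ((a - b) / 2)). pose proof (COS_bound ((a + b) / 2)).
  assert (Rabs (cos ((a + b) / 2)) <= 1) by (unfold Rabs; destruct Rcase_abs; lra).
  replace (Rabs 2) with 2 by (rewrite Rabs_right; lra).
  replace (Rabs ((a - b) / 2)) with (Rabs (a - b) / 2) in H.
  2:{ unfold Rdiv. rewrite Rabs_mult. rewrite (Rabs_pos_eq (/2)) by lra. reflexivity. }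
  pose proof (Rabs_pos (sin ((a - b) / 2))). pose proof (Rabs_pos (cos ((a + b) / 2))).
  nra.
Qed.

Definition clamp x := Rmax (-1) (Rmin 1 x).

Lemma acos_clamp x : acos x = acos (clamp x).
Proof.
  unfold clamp, Rmax, Rmin, acos.
  repeat (destruct Rle_dec); try lra; reflexivity.
Qed.

Lemma clamp_lip x y : Rabs (clamp x - clamp y) <= Rabs (x - y).
Proof.
  unfold clamp, Rmax, Rmin. repeat destruct Rle_dec; unfold Rabs; repeat destruct Rcase_abs; lra.
Qed.

Lemma clamp_range x : -1 <= clamp x <= 1.
Proof. unfold clamp, Rmax, Rmin. repeat destruct Rle_dec; lra. Qed.

Lemma sin_mono c t : 0 < c -> c <= PI / 2 -> c <= t -> t <= PI - c -> sin c <= sin t.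
Proof.
  intros Hc Hc2 H1 H2.
  destruct (Rle_lt_dec t (PI / 2)).
  - destruct (Req_dec c t) as [->|Hne]; [lra|].
    left. apply sin_increasing_1; lra.
  - rewrite <- (sin_PI_x t).
    destruct (Req_dec c (PI - t)) as [->|Hne]; [lra|].
    left. apply sin_increasing_1; lra.
Qed.

Lemma acos_core e x y : 0 < e <= 1 -> -1 <= x <= 1 -> -1 <= y <= 1 ->
  acos x + e <= acos y -> 2 * (sin (e / 2) * sin (e / 2)) <= x - y.
Proof.
  intros He Hx Hy Hab.
  pose proof (acos_bound x). pose proof (acos_bound y).
  pose proof PI2_1.
  replace (x - y) with (cos (acos x) - cos (acos y)) by (rewrite !cos_acos; auto).
  set (a := acos x) in *. set (b := acos y) in *.
  rewrite form2.
  replace ((a - b) / 2) with (- ((b - a) / 2)) by field. rewrite sin_neg.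
  assert (S1 : sin (e / 2) <= sin ((b - a) / 2)) by (apply sin_mono; lra).
  assert (S2 : sin (e / 2) <= sin ((a + b) / 2)) by (apply sin_mono; lra).
  assert (P : 0 < sin (e / 2)) by (apply sin_gt_0; lra).
  nra.
Qed.

Lemma acos_uc eps : 0 < eps -> exists delta, 0 < delta /\
  forall x y, Rabs (x - y) < delta -> Rabs (acos x - acos y) < eps.
Proof.
  intros He. set (e := Rmin eps 1).
  assert (He1 : 0 < e <= 1) by (unfold e, Rmin; destruct Rle_dec; lra).
  assert (He2 : e <= eps) by (unfold e, Rmin; destruct Rle_dec; lra).
  exists (2 * (sin (e / 2) * sin (e / 2))). split.
  { assert (0 < sin (e / 2)) by (apply sin_gt_0; pose proof PI2_1; lra). nra. }
  intros x y Hxy.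
  rewrite (acos_clamp x), (acos_clamp y).
  pose proof (clamp_lip x y). pose proof (clamp_range x). pose proof (clamp_range y).
  destruct (Rlt_le_dec (Rabs (acos (clamp x) - acos (clamp y))) e); [lra|].
  exfalso. assert (Hc : Rabs (clamp x - clamp y) < 2 * (sin (e / 2) * sin (e / 2))) by lra.
  apply Rabs_def2 in Hc. destruct Hc as [Hc1 Hc2].
  revert r. unfold Rabs; destruct Rcase_abs as [q|q]; intro r.
  - pose proof (acos_core e (clamp x) (clamp y) He1 H0 H1 ltac:(lra)). lra.
  - pose proof (acos_core e (clamp y) (clamp x) He1 H1 H0 ltac:(lra)). lra.
Qed.

Definition H (rho a b : R) (w : vec) : R :=
  angle (Dmat rho (Tmat a w)) (Dmat rho (Tmat b w)).

Lemma T_norm a w : vnorm (Tmat a w) = vnorm w.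
Proof.
  unfold vnorm, dot, Tmat; simpl. f_equal.
  pose proof (sin2_cos2 a). unfold Rsqr in H0.
  transitivity ((sin a * sin a + cos a * cos a) * (fst w * fst w + snd w * snd w)); [ring|].
  rewrite H0. ring.
Qed.

Lemma D_norm_ge rho p : 0 <= rho <= 1 -> rho * vnorm p <= vnorm (Dmat rho p).
Proof.
  intros Hr. unfold vnorm, dot, Dmat; simpl.
  rewrite <- (sqrt_square rho) at 1 by lra.
  rewrite <- sqrt_mult_alt by nra.
  apply sqrt_le_1_alt.
  assert (0 <= fst p * fst p) by nra. assert (0 <= snd p * snd p) by nra.
  assert (rho * rho <= 1) by nra. nra.
Qed.

Lemma abs4 a b c d : Rabs (a + b + c + d) <= Rabs a + Rabs b + Rabs c + Rabs d.
Proof.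
  eapply Rle_trans; [apply Rabs_triang|].
  pose proof (Rabs_triang (a + b) c). pose proof (Rabs_triang a b). lra.
Qed.

Lemma mul_le1 c x : Rabs c <= 1 -> Rabs (c * x) <= Rabs x.
Proof. intros. rewrite Rabs_mult. pose proof (Rabs_pos x). pose proof (Rabs_pos c). nra. Qed.

Lemma mul_leL c x L : Rabs c <= L -> Rabs (c * x) <= L * Rabs x.
Proof. intros. rewrite Rabs_mult. pose proof (Rabs_pos x). pose proof (Rabs_pos c). nra. Qed.

Lemma cos_abs1 a : Rabs (cos a) <= 1.
Proof. pose proof (COS_bound a). unfold Rabs; destruct Rcase_abs; lra. Qed.
Lemma sin_abs1 a : Rabs (sin a) <= 1.
Proof. pose proof (SIN_bound a). unfold Rabs; destruct Rcase_abs; lra. Qed.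

Lemma T_d1 a a' w w' :
  dl1 (Tmat a w) (Tmat a' w') <= 2 * dl1 w w' + 2 * Rabs (a - a') * (Rabs (fst w') + Rabs (snd w')).
Proof.
  unfold dl1, Tmat; simpl.
  destruct w as [w1 w2]; destruct w' as [v1 v2]; simpl.
  pose proof (cos_lip a a'). pose proof (sin_lip a a').
  pose proof (cos_abs1 a). pose proof (sin_abs1 a).
  replace (cos a * w1 - sin a * w2 - (cos a' * v1 - sin a' * v2)) with
    (cos a * (w1 - v1) + (cos a - cos a') * v1 + (- sin a) * (w2 - v2) + (- (sin a - sin a')) * v2) by ring.
  replace (sin a * w1 + cos a * w2 - (sin a' * v1 + cos a' * v2)) with
    (sin a * (w1 - v1) + (sin a - sin a') * v1 + cos a * (w2 - v2) + (cos a - cos a') * v2) by ring.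
  pose proof (abs4 (cos a * (w1 - v1)) ((cos a - cos a') * v1) ((- sin a) * (w2 - v2)) ((- (sin a - sin a')) * v2)).
  pose proof (abs4 (sin a * (w1 - v1)) ((sin a - sin a') * v1) (cos a * (w2 - v2)) ((cos a - cos a') * v2)).
  pose proof (mul_le1 (cos a) (w1 - v1) H2).
  pose proof (mul_le1 (- sin a) (w2 - v2) ltac:(rewrite Rabs_Ropp; auto)).
  pose proof (mul_le1 (sin a) (w1 - v1) H3).
  pose proof (mul_le1 (cos a) (w2 - v2) H2).
  pose proof (mul_leL (cos a - cos a') v1 _ H0).
  pose proof (mul_leL (- (sin a - sin a')) v2 _ ltac:(rewrite Rabs_Ropp; exact H1)).
  pose proof (mul_leL (sin a - sin a') v1 _ H1).
  pose proof (mul_leL (cos a - cos a') v2 _ H0).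
  lra.
Qed.

Lemma D_d1 rho rho' p p' : 0 <= rho <= 1 ->
  dl1 (Dmat rho p) (Dmat rho' p') <= dl1 p p' + Rabs (rho - rho') * Rabs (snd p').
Proof.
  intros Hr. unfold dl1, Dmat; simpl.
  replace (rho * snd p - rho' * snd p') with (rho * (snd p - snd p') + (rho - rho') * snd p') by ring.
  pose proof (Rabs_triang (rho * (snd p - snd p')) ((rho - rho') * snd p')).
  assert (Rabs rho <= 1) by (rewrite Rabs_pos_eq; lra).
  pose proof (mul_le1 rho (snd p - snd p') H1).
  rewrite (Rabs_mult (rho - rho') (snd p')) in H0. lra.
Qed.

Lemma H_uc rho1 eps : 0 < rho1 -> 0 < eps -> exists delta, 0 < delta /\
  forall rho rho' a a' b b' w w',
  rho1 <= rho <= 1 -> rho1 <= rho' <= 1 -> 1/2 <= vnorm w -> 1/2 <= vnorm w' ->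
  Rabs (fst w') <= 2 -> Rabs (snd w') <= 2 ->
  Rabs (rho - rho') < delta -> Rabs (a - a') < delta -> Rabs (b - b') < delta ->
  Rabs (fst w - fst w') < delta -> Rabs (snd w - snd w') < delta ->
  Rabs (H rho a b w - H rho' a' b' w') < eps.
Proof.
  intros Hr He. destruct (acos_uc eps He) as [da [Hda Ha]].
  exists (da * rho1 / 200). split; [apply Rmult_lt_0_compat; [nra|lra]|].
  intros rho rho' a a' b b' w w' R1 R2 N1 N2 B1 B2 Dr Da Db Dw1 Dw2.
  unfold H, angle. apply Ha.
  set (m := rho1 / 2).
  assert (Hm : 0 < m) by (unfold m; lra).
  assert (NB : forall r c u, rho1 <= r <= 1 -> 1/2 <= vnorm u -> m <= vnorm (Dmat r (Tmat c u))).
  { intros r c u Hr' Hu. pose proof (D_norm_ge r (Tmat c u) ltac:(lra)). rewrite T_norm in H0.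
    unfold m. nra. }
  pose proof (cfun_lip m (Dmat rho (Tmat a w)) (Dmat rho (Tmat b w)) (Dmat rho' (Tmat a' w')) (Dmat rho' (Tmat b' w'))
     Hm (NB _ _ _ R1 N1) (NB _ _ _ R1 N1) (NB _ _ _ R2 N2) (NB _ _ _ R2 N2)) as CL.
  unfold cfun in CL.
  assert (Vw' : vnorm w' <= 4) by (pose proof (vnorm_le_l1 w'); lra).
  assert (DD : forall c c', Rabs (c - c') < da * rho1 / 200 ->
     dl1 (Dmat rho (Tmat c w)) (Dmat rho' (Tmat c' w')) <= 16 * (da * rho1 / 200)).
  { intros c c' Hc.
    pose proof (D_d1 rho rho' (Tmat c w) (Tmat c' w') ltac:(lra)).
    pose proof (T_d1 c c' w w').
    pose proof (comp2_le (Tmat c' w')). rewrite T_norm in H2.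
    assert (dl1 w w' < 2 * (da * rho1 / 200)) by (unfold dl1; lra).
    assert (Rabs (snd (Tmat c' w')) <= 4) by lra.
    pose proof (Rabs_pos (fst w')). pose proof (Rabs_pos (snd w')).
    pose proof (Rabs_pos (rho - rho')). pose proof (Rabs_pos (c - c')).
    assert (Rabs (rho - rho') * Rabs (snd (Tmat c' w')) <= (da * rho1 / 200) * 4) by nra.
    assert (Rabs (c - c') * (Rabs (fst w') + Rabs (snd w')) <= (da * rho1 / 200) * 4) by nra.
    lra. }
  pose proof (DD a a' Da). pose proof (DD b b' Db).
  eapply Rle_lt_trans; [exact CL|].
  unfold m. apply Rlt_div_l; [lra|].
  assert (0 < da * rho1) by nra. nra.
Qed.

Definition sc (l : R) (x : vec) : vec := (l * fst x, l * snd x).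

Lemma vnorm_sc l x : 0 <= l -> vnorm (sc l x) = l * vnorm x.
Proof.
  intros Hl. unfold vnorm, dot, sc; simpl.
  replace (l * fst x * (l * fst x) + l * snd x * (l * snd x)) with ((l * l) * (fst x * fst x + snd x * snd x)) by ring.
  rewrite sqrt_mult_alt by nra. rewrite sqrt_square by lra. reflexivity.
Qed.

Lemma angle_sc l x y : 0 < l -> angle (sc l x) (sc l y) = angle x y.
Proof.
  intros Hl. unfold angle. f_equal.
  rewrite !vnorm_sc by lra.
  unfold dot, sc; simpl.
  replace (l * fst x * (l * fst y) + l * snd x * (l * snd y)) with ((l * l) * (fst x * fst y + snd x * snd y)) by ring.
  rewrite Rabs_mult. rewrite (Rabs_pos_eq (l * l)) by nra.
  unfold Rdiv. replace (l * vnorm x * (l * vnorm y)) with ((l * l) * (vnorm x * vnorm y)) by ring.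
  rewrite Rinv_mult.
  transitivity (Rabs (fst x * fst y + snd x * snd y) * / (vnorm x * vnorm y) * ((l * l) * / (l * l))); [ring|].
  rewrite Rinv_r by nra. ring.
Qed.

Lemma H_sc rho a b l w : 0 < l -> H rho a b (sc l w) = H rho a b w.
Proof.
  intros Hl. unfold H.
  replace (Dmat rho (Tmat a (sc l w))) with (sc l (Dmat rho (Tmat a w))).
  2:{ unfold sc, Dmat, Tmat; simpl; f_equal; ring. }
  replace (Dmat rho (Tmat b (sc l w))) with (sc l (Dmat rho (Tmat b w))).
  2:{ unfold sc, Dmat, Tmat; simpl; f_equal; ring. }
  apply angle_sc; auto.
Qed.

Lemma vnorm_zero w : vnorm w = 0 -> w = (0, 0).
Proof.
  unfold vnorm, dot. intros Hw. apply sqrt_eq_0 in Hw; [|nra].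
  destruct w as [w1 w2]; simpl in *. f_equal; nra.
Qed.

Lemma vnorm_pos w : w <> (0, 0) -> 0 < vnorm w.
Proof.
  intros Hw. destruct (vnorm_ge0 w) as [|E]; auto.
  exfalso. apply Hw. apply vnorm_zero. auto.
Qed.

Fixpoint ssum (f : nat -> R) (n : nat) : R :=
  match n with O => 0 | S k => ssum f k + f k end.

Lemma ssum_le f g n : (forall k, (k < n)%nat -> f k <= g k) -> ssum f n <= ssum g n.
Proof.
  induction n; intros Hk; cbn [ssum]; [simpl; lra|].
  pose proof (Hk n ltac:(lia)). assert (ssum f n <= ssum g n) by (apply IHn; intros; apply Hk; lia). lra.
Qed.

Lemma ssum_diff f g e n : (forall k, (k < n)%nat -> f k <= g k + e) -> ssum f n <= ssum g n + INR n * e.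
Proof.
  induction n; intros Hk; cbn [ssum]; [simpl; lra|].
  pose proof (Hk n ltac:(lia)). assert (ssum f n <= ssum g n + INR n * e) by (apply IHn; intros; apply Hk; lia).
  rewrite S_INR. lra.
Qed.

Lemma ssum_ext f g n : (forall k, (k < n)%nat -> f k = g k) -> ssum f n = ssum g n.
Proof.
  induction n; intros Hk; cbn [ssum]; [simpl; lra|].
  rewrite (Hk n ltac:(lia)). rewrite IHn; [reflexivity|]. intros; apply Hk; lia.
Qed.

Lemma sum_f_ssum f m : sum_f_R0 f m = ssum f (S m).
Proof. induction m; simpl; [lra|]. simpl in IHm. rewrite IHm. reflexivity. Qed.

Lemma Phi_rep rho phi k v : rho <> 0 ->
  Phi rho phi k v = Dmat rho (Tmat (INR k * phi) (Dinv rho v)).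
Proof.
  intros Hr. induction k.
  - simpl. rewrite Rmult_0_l. unfold Dmat, Tmat, Dinv. rewrite cos_0, sin_0.
    destruct v; simpl; f_equal; field; auto.
  - simpl Phi. rewrite IHk. rewrite S_INR.
    replace ((INR k + 1) * phi) with (INR k * phi + phi) by ring.
    unfold Amat, Dmat, Tmat, Dinv.
    rewrite cos_plus, sin_plus.
    destruct v; simpl; f_equal; field; auto.
Qed.

Lemma Phi_add rho phi k n v : Phi rho phi (k + n) v = Phi rho phi k (Phi rho phi n v).
Proof. induction k; simpl; [reflexivity|]. rewrite IHk. reflexivity. Qed.

Lemma Dmat_Dinv rho w : rho <> 0 -> Dinv rho (Dmat rho w) = w.
Proof. intros. unfold Dinv, Dmat; destruct w; simpl; f_equal; field; auto. Qed.

Lemma Phi_nz rho phi k v : rho <> 0 -> v <> (0, 0) -> Phi rho phi k v <> (0, 0).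
Proof.
  intros Hr Hv E. rewrite Phi_rep in E by auto.
  set (w := Dinv rho v) in *.
  assert (HT : Tmat (INR k * phi) w = (0, 0)).
  { rewrite <- (Dmat_Dinv rho (Tmat (INR k * phi) w)) by auto. rewrite E.
    unfold Dinv; simpl; f_equal; field; auto. }
  assert (HN : vnorm w = 0).
  { rewrite <- (T_norm (INR k * phi) w), HT. unfold vnorm, dot; simpl.
    replace (0 * 0 + 0 * 0) with 0 by ring. apply sqrt_0. }
  apply vnorm_zero in HN. apply Hv.
  destruct v as [v1 v2]; unfold w, Dinv in HN; simpl in HN. injection HN; intros E2 E1.
  f_equal; auto.
  apply (Rmult_eq_reg_r (/ rho)); [|apply Rinv_neq_0_compat; auto]. rewrite Rmult_0_l. exact E2.
Qed.

Definition Ssum rho phi v n := ssum (fun k => angle (Phi rho phi k v) (Phi rho phi (S k) v)) n.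
Definition hs rho phi w n := ssum (fun k => H rho (INR k * phi) (INR (S k) * phi) w) n.

Lemma Ssum_hs rho phi v n : rho <> 0 -> Ssum rho phi v n = hs rho phi (Dinv rho v) n.
Proof.
  intros Hr. unfold Ssum, hs. apply ssum_ext. intros k _.
  rewrite !Phi_rep by auto. reflexivity.
Qed.

Lemma avg_eq rho phi v m : avg_angle rho phi v m = Ssum rho phi v (S m) / INR (S m).
Proof. unfold avg_angle, Ssum. rewrite sum_f_ssum. reflexivity. Qed.

Lemma Ssum_add rho phi v N n : Ssum rho phi v (N + n) = Ssum rho phi v n + Ssum rho phi (Phi rho phi n v) N.
Proof.
  unfold Ssum. induction N; cbn [ssum Nat.add]; [ring|].
  rewrite IHN. rewrite <- !Phi_add. replace (S (N + n)) with (S N + n)%nat by lia. ring.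
Qed.

Lemma Ssum_le_pi rho phi v n : Ssum rho phi v n <= INR n * PI.
Proof.
  unfold Ssum. replace (INR n * PI) with (ssum (fun _ => 0) n + INR n * PI).
  - apply ssum_diff. intros. unfold angle. pose proof (acos_bound (Rabs (dot (Phi rho phi k v) (Phi rho phi (S k) v)) /
      (vnorm (Phi rho phi k v) * vnorm (Phi rho phi (S k) v)))). lra.
  - assert (ssum (fun _ => 0) n = 0) by (induction n; simpl; lra). lra.
Qed.

Lemma block rho phi N B : rho <> 0 -> (1 <= N)%nat ->
  (forall u, u <> (0, 0) -> Ssum rho phi u N <= INR N * B) ->
  forall n v, v <> (0, 0) -> Ssum rho phi v n <= INR n * B + INR N * (PI + Rabs B).
Proof.
  intros Hr HN Hb n.
  induction n as [n IH] using (well_founded_induction Wf_nat.lt_wf).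
  intros v Hv.
  destruct (Nat.lt_ge_cases n N) as [Hl|Hg].
  - pose proof (Ssum_le_pi rho phi v n).
    assert (INR n <= INR N) by (apply le_INR; lia).
    pose proof (pos_INR n). pose proof PI_RGT_0.
    assert (- Rabs B <= B) by (unfold Rabs; destruct Rcase_abs; lra).
    pose proof (Rabs_pos B). nra.
  - replace n with (N + (n - N))%nat by lia.
    rewrite Ssum_add.
    pose proof (IH (n - N)%nat ltac:(lia) v Hv).
    pose proof (Hb (Phi rho phi (n - N) v) (Phi_nz _ _ _ _ Hr Hv)).
    rewrite plus_INR. pose proof (pos_INR N). pose proof PI_RGT_0. pose proof (Rabs_pos B). nra.
Qed.

Lemma LS_le (u : nat -> R) (B C : R) : 0 <= C -> (forall m, u m <= B + C / INR (S m)) -> Rbar_le (LimSup_seq u) B.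
Proof.
  intros HC Hu. unfold LimSup_seq. destruct (ex_LimSup_seq u) as [l Hl]; simpl.
  destruct l as [l| |]; simpl in Hl |- *.
  - apply Rnot_lt_le. intro Hlt.
    assert (He : 0 < (l - B) / 2) by lra.
    destruct (Hl (mkposreal _ He)) as [H1 _]. simpl in H1.
    destruct (INR_unbounded (C / ((l - B) / 2))) as [N HN].
    destruct (H1 N) as [n [Hn Hun]].
    pose proof (Hu n).
    assert (INR N <= INR n) by (apply le_INR; lia).
    assert (HS : INR (S n) > C / ((l - B) / 2)) by (rewrite S_INR; lra).
    assert (C / INR (S n) < (l - B) / 2).
    { apply Rlt_div_l; [pose proof (pos_INR n); rewrite S_INR; lra|].
      apply Rlt_div_l in HS; auto. lra. }
    lra.
  - destruct (Hl (B + C) O) as [n [_ Hn]]. pose proof (Hu n).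
    assert (C / INR (S n) <= C).
    { rewrite S_INR. pose proof (pos_INR n). apply Rle_div_l; [lra|]. nra. }
    lra.
  - exact I.
Qed.

Lemma ev (u : nat -> R) (s e : R) : Rbar_le (LimSup_seq u) s -> 0 < e -> exists N, forall n, (N <= n)%nat -> u n < s + e.
Proof.
  intros Hs He. unfold LimSup_seq in Hs. destruct (ex_LimSup_seq u) as [l Hl]; simpl in Hs.
  destruct l as [l| |]; simpl in Hl, Hs.
  - destruct (Hl (mkposreal _ He)) as [_ [N HN]]. exists N. intros n Hn. simpl in HN.
    pose proof (HN n Hn). lra.
  - contradiction.
  - destruct (Hl (s + e)) as [N HN]. exists N. auto.
Qed.

Lemma grid1 K t : (1 <= K)%nat -> -1 <= t <= 1 ->
  exists i, (i <= 2 * K)%nat /\ Rabs (t - (INR i / INR K - 1)) <= / INR K.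
Proof.
  intros HK Ht.
  assert (HKp : 0 < INR K) by (apply lt_0_INR; lia).
  set (x := INR K * (t + 1)).
  assert (Hx : 0 <= x <= 2 * INR K) by (unfold x; nra).
  destruct (archimed x) as [A1 A2].
  assert (Hz : (1 <= up x)%Z). { assert (Hz0 : (0 < up x)%Z) by (apply lt_0_IZR; lra). lia. }
  exists (Z.to_nat (up x - 1)).
  assert (E : INR (Z.to_nat (up x - 1)) = IZR (up x) - 1).
  { rewrite INR_IZR_INZ. rewrite Z2Nat.id by lia. rewrite minus_IZR. reflexivity. }
  split.
  - apply INR_le. rewrite E, mult_INR. simpl (INR 2). lra.
  - rewrite E.
    replace (t - ((IZR (up x) - 1) / INR K - 1)) with ((x - (IZR (up x) - 1)) / INR K) by (unfold x; field; lra).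
    rewrite Rabs_div by lra. rewrite (Rabs_pos_eq (INR K)) by lra.
    unfold Rdiv. rewrite Rmult_comm. rewrite <- (Rmult_1_r (/ INR K)) at 2.
    apply Rmult_le_compat_l; [left; apply Rinv_0_lt_compat; lra|].
    unfold Rabs; destruct Rcase_abs; lra.
Qed.

Lemma fin1 (Q : nat -> nat -> Prop) :
  (forall i N N', (N <= N')%nat -> Q i N -> Q i N') -> (forall i, exists N, Q i N) ->
  forall M, exists N, forall i, (i <= M)%nat -> Q i N.
Proof.
  intros Hm Hex M. induction M.
  - destruct (Hex O) as [N HN]. exists N. intros i Hi. replace i with O by lia. auto.
  - destruct IHM as [N1 H1]. destruct (Hex (S M)) as [N2 H2].
    exists (Nat.max N1 N2). intros i Hi.
    destruct (Nat.le_gt_cases i M).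
    + apply (Hm i N1); [lia| auto].
    + replace i with (S M) by lia. apply (Hm _ N2); [lia|auto].
Qed.

Lemma Dmat_nz rho w : rho <> 0 -> w <> (0, 0) -> Dmat rho w <> (0, 0).
Proof.
  intros Hr Hw E. apply Hw. rewrite <- (Dmat_Dinv rho w) by auto. rewrite E.
  unfold Dinv; simpl; f_equal; field; auto.
Qed.

Lemma Dinv_nz rho v : rho <> 0 -> v <> (0, 0) -> Dinv rho v <> (0, 0).
Proof.
  intros Hr Hv E. apply Hv. destruct v as [v1 v2]. unfold Dinv in E; simpl in E.
  injection E; intros E2 E1. f_equal; auto.
  apply (Rmult_eq_reg_r (/ rho)); [|apply Rinv_neq_0_compat; auto]. rewrite Rmult_0_l. exact E2.
Qed.

Lemma unit_of w : w <> (0, 0) -> vnorm (sc (/ vnorm w) w) = 1 /\ 0 < / vnorm w.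
Proof.
  intros Hw. pose proof (vnorm_pos w Hw).
  split; [|apply Rinv_0_lt_compat; auto].
  rewrite vnorm_sc by (left; apply Rinv_0_lt_compat; auto). field. lra.
Qed.

Lemma hs_sc rho phi l w n : 0 < l -> hs rho phi (sc l w) n = hs rho phi w n.
Proof. intros Hl. unfold hs. apply ssum_ext. intros k _. apply H_sc; auto. Qed.

Lemma abs_near a b : Rabs a <= 1 -> Rabs (a - b) <= 1 -> Rabs b <= 2.
Proof. unfold Rabs; repeat destruct Rcase_abs; lra. Qed.

Theorem mainTheorem16 : usc_on dom theta1.
Proof.
  unfold usc_on. intros phi0 rho0 Hd0 r Hr. destruct Hd0 as [Hphi0 Hrho0].
  assert (Hr0 : rho0 <> 0) by lra.
  assert (Hs : exists s : R, s < r /\ forall v, v <> (0, 0) -> Rbar_le (LimSup_seq (avg_angle rho0 phi0 v)) s).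
  { revert Hr. unfold theta1, Rbar_lub.
    destruct (Rbar_ex_lub _) as [l [Hub Hlb]]. simpl. intro Hr.
    destruct l as [l| |].
    - exists l. split; [exact Hr|]. intros v Hv. apply Hub. exists v. auto.
    - contradiction.
    - exists (r - 1). split; [lra|]. intros v Hv.
      pose proof (Hub (LimSup_seq (avg_angle rho0 phi0 v)) (ex_intro _ v (conj Hv eq_refl))).
      destruct (LimSup_seq (avg_angle rho0 phi0 v)); simpl in *; tauto. }
  destruct Hs as [s [Hsr Hs]].
  set (eps := (r - s) / 4).
  assert (Heps : 0 < eps) by (unfold eps; lra).
  set (rho1 := rho0 / 2).
  assert (Hrho1 : 0 < rho1) by (unfold rho1; lra).
  destruct (H_uc rho1 eps Hrho1 Heps) as [du [Hdu HU]].
  destruct (INR_unbounded (Rmax 4 (2 / du))) as [K HK].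
  assert (HK4 : INR K > 4) by (pose proof (Rmax_l 4 (2 / du)); lra).
  assert (HKdu : INR K > 2 / du) by (pose proof (Rmax_r 4 (2 / du)); lra).
  assert (HK1 : (1 <= K)%nat) by (destruct K; [simpl in HK4; lra| lia]).
  assert (HKp : 0 < INR K) by lra.
  assert (HiK : / INR K < du).
  { apply Rmult_lt_reg_r with (INR K); [lra|]. rewrite Rinv_l by lra.
    apply Rlt_div_l in HKdu; [|lra]. lra. }
  assert (HiK4 : / INR K < 1 / 4).
  { apply Rmult_lt_reg_r with (INR K); [lra|]. rewrite Rinv_l by lra. lra. }
  assert (HiK0 : 0 < / INR K) by (apply Rinv_0_lt_compat; lra).
  set (g := fun i j : nat => (INR i / INR K - 1, INR j / INR K - 1)).
  assert (Hpt : forall w, w <> (0, 0) -> exists N, forall n, (N <= n)%nat ->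
             hs rho0 phi0 w n <= INR n * (s + eps)).
  { intros w Hw. set (v := Dmat rho0 w).
    assert (Hv : v <> (0, 0)) by (apply Dmat_nz; auto).
    destruct (ev _ s eps (Hs v Hv) Heps) as [N HN].
    exists (S N). intros n Hn. destruct n as [|m]; [lia|].
    pose proof (HN m ltac:(lia)) as Hm.
    rewrite avg_eq, Ssum_hs in Hm by auto. unfold v in Hm. rewrite Dmat_Dinv in Hm by auto.
    pose proof (pos_INR m). rewrite S_INR in *.
    apply Rlt_div_l in Hm; [|lra]. lra. }
  assert (Hfin : exists Ns, forall i, (i <= 2 * K)%nat -> forall j, (j <= 2 * K)%nat ->
            g i j <> (0, 0) -> forall n, (Ns <= n)%nat -> hs rho0 phi0 (g i j) n <= INR n * (s + eps)).
  { apply (fin1 (fun i N => forall j, (j <= 2 * K)%nat ->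
            g i j <> (0, 0) -> forall n, (N <= n)%nat -> hs rho0 phi0 (g i j) n <= INR n * (s + eps))).
    - intros i N N' HNN' HQ j Hj Hg n Hn. apply HQ; auto; lia.
    - intros i.
      apply (fin1 (fun j N => g i j <> (0, 0) -> forall n, (N <= n)%nat -> hs rho0 phi0 (g i j) n <= INR n * (s + eps))).
      + intros j N N' HNN' HQ Hg n Hn. apply HQ; auto; lia.
      + intros j. destruct (classic (g i j = (0, 0))) as [E|Ne].
        * exists O. intros Hg. contradiction.
        * destruct (Hpt _ Ne) as [N HN]. exists N. intros _. exact HN. }
  destruct Hfin as [Ns HNs].
  set (N := S Ns).
  assert (HN1 : (1 <= N)%nat) by (unfold N; lia).
  assert (B3 : forall w, vnorm w = 1 -> hs rho0 phi0 w N <= INR N * (s + 2 * eps)).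
  { intros w Hw1.
    assert (Hw0 : 0 < vnorm w) by lra.
    assert (Hf1 : Rabs (fst w) <= 1) by (rewrite <- Hw1; apply comp1_le).
    assert (Hf2 : Rabs (snd w) <= 1) by (rewrite <- Hw1; apply comp2_le).
    destruct (grid1 K (fst w) HK1 ltac:(apply Rabs_le_between; auto)) as [i [Hi Hgi]].
    destruct (grid1 K (snd w) HK1 ltac:(apply Rabs_le_between; auto)) as [j [Hj Hgj]].
    set (p := g i j).
    assert (Hp1 : Rabs (fst w - fst p) <= / INR K) by exact Hgi.
    assert (Hp2 : Rabs (snd w - snd p) <= / INR K) by exact Hgj.
    assert (Hnp : 1 / 2 <= vnorm p).
    { pose proof (norm_diff w p Hw0) as Hnd. unfold dl1 in Hnd.
      apply Rabs_le_between in Hnd. lra. }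
    assert (Hpnz : p <> (0, 0)).
    { intro E. rewrite E in Hnp. unfold vnorm, dot in Hnp; simpl in Hnp.
      replace (0 * 0 + 0 * 0) with 0 in Hnp by ring. rewrite sqrt_0 in Hnp. lra. }
    assert (Hb1 : Rabs (fst p) <= 2).
    { apply (abs_near (fst w)); lra. }
    assert (Hb2 : Rabs (snd p) <= 2).
    { apply (abs_near (snd w)); lra. }
    assert (Hcmp : hs rho0 phi0 w N <= hs rho0 phi0 p N + INR N * eps).
    { unfold hs. apply ssum_diff. intros k _.
      assert (Hq : Rabs (H rho0 (INR k * phi0) (INR (S k) * phi0) w - H rho0 (INR k * phi0) (INR (S k) * phi0) p) < eps).
      { apply HU; try lra; unfold rho1; try lra;
          rewrite ?Rminus_diag, ?Rabs_R0; lra. }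
      apply Rabs_def2 in Hq. lra. }
    pose proof (HNs i Hi j Hj Hpnz N ltac:(unfold N; lia)) as Hq2.
    fold p in Hq2. pose proof (pos_INR N). nra. }
  set (delta := Rmin (du / INR (S N)) rho1).
  assert (HSN : 0 < INR (S N)) by (apply lt_0_INR; lia).
  assert (HSN1 : 1 <= INR (S N)) by (apply (le_INR 1); lia).
  assert (Hdpos : 0 < delta) by (unfold delta; apply Rmin_pos; [apply Rdiv_lt_0_compat|]; lra).
  assert (Hd1 : delta <= du / INR (S N)) by apply Rmin_l.
  assert (Hd2 : delta <= rho1) by apply Rmin_r.
  assert (Hdu' : du / INR (S N) <= du).
  { apply Rle_div_l; [lra|]. nra. }
  exists delta. split; [exact Hdpos|].
  intros phi rho [Hphi Hrho] Hdphi Hdrho.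
  assert (Hrz : rho <> 0) by lra.
  assert (Hrho_lo : rho1 <= rho) by (apply Rabs_def2 in Hdrho; unfold rho1 in *; lra).
  set (B := s + 3 * eps).
  assert (Hblk : forall u, u <> (0, 0) -> Ssum rho phi u N <= INR N * B).
  { intros u Hu. rewrite Ssum_hs by auto.
    set (w := Dinv rho u).
    assert (Hw : w <> (0, 0)) by (apply Dinv_nz; auto).
    destruct (unit_of w Hw) as [Hw1 Hl].
    rewrite <- (hs_sc rho phi (/ vnorm w) w N Hl).
    set (w' := sc (/ vnorm w) w) in *.
    assert (Hc : hs rho phi w' N <= hs rho0 phi0 w' N + INR N * eps).
    { unfold hs. apply ssum_diff. intros k Hk.
      assert (HkN : INR k <= INR (S N)) by (apply le_INR; lia).
      assert (HSk : INR (S k) <= INR (S N)) by (apply le_INR; lia).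
      pose proof (pos_INR k) as Hpk.
      assert (Ea : forall c, 0 <= c <= INR (S N) -> Rabs (c * phi - c * phi0) < du).
      { intros c Hc. replace (c * phi - c * phi0) with (c * (phi - phi0)) by ring.
        rewrite Rabs_mult, (Rabs_pos_eq c) by lra.
        pose proof (Rabs_pos (phi - phi0)).
        apply Rle_lt_trans with (INR (S N) * Rabs (phi - phi0)); [nra|].
        apply Rlt_le_trans with (INR (S N) * (du / INR (S N))).
        - apply Rmult_lt_compat_l; lra.
        - right; field; lra. }
      assert (Hq : Rabs (H rho (INR k * phi) (INR (S k) * phi) w' - H rho0 (INR k * phi0) (INR (S k) * phi0) w') < eps).
      { pose proof (comp1_le w'). pose proof (comp2_le w').
        apply HU; try lra; unfold rho1 in *; try lra.
        - apply Ea; pose proof (pos_INR (S k)); lra.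
        - apply Ea; pose proof (pos_INR (S k)); lra.
        - rewrite Rminus_diag, Rabs_R0; lra.
        - rewrite Rminus_diag, Rabs_R0; lra. }
      apply Rabs_def2 in Hq. lra. }
    pose proof (B3 w' Hw1). unfold B. pose proof (pos_INR N). nra. }
  set (C := INR N * (PI + Rabs B)).
  assert (HC : 0 <= C) by (unfold C; pose proof (pos_INR N); pose proof PI_RGT_0; pose proof (Rabs_pos B); nra).
  pose proof (block rho phi N B Hrz HN1 Hblk) as Hbl. fold C in Hbl.
  assert (HLS : forall v, v <> (0, 0) -> Rbar_le (LimSup_seq (avg_angle rho phi v)) B).
  { intros v Hv. apply (LS_le _ B C HC). intros m. rewrite avg_eq.
    pose proof (Hbl (S m) v Hv). pose proof (pos_INR m).
    assert (0 < INR (S m)) by (rewrite S_INR; lra).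
    apply Rle_div_l; [lra|].
    replace ((B + C / INR (S m)) * INR (S m)) with (INR (S m) * B + C) by (field; lra). lra. }
  unfold theta1, Rbar_lub. destruct (Rbar_ex_lub _) as [l [Hub2 Hlub]]. simpl.
  apply Rbar_le_lt_trans with (Finite B).
  - apply Hlub. intros x [v [Hv ->]]. apply HLS; auto.
  - simpl. unfold B, eps. lra.
Qed.
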